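(* Let $(\mu_n)_{n\ge0}$ be complex numbers with $\mu_0=1$, let $M(z)=\sum_{n\ge0}\mu_nz^n$, let $(h_n)_{n\ge1}$ be its boolean cumulants and $(c_n)_{n\ge1}$ its free cumulants. Then for every $n\ge 2$, $$c_n=\sum_{r=1}^{n-1}\ \sum_{\substack{i_1+\dots+i_r=n\\ i_j\ge1}}\frac{(-1)^{r-1}}{n-1}\binom{n-1}{r}\,h_{i_1}h_{i_2}\cdots h_{i_r},$$ where the inner sum is over ordered tuples $(i_1,\dots,i_r)$ of positive integers summing to $n$. *)

(* Defs.v *)
From HB Require Import structures.
From mathcomp Require Import all_boot all_order all_algebra.
From mathcomp Require Import complex reals.
Set Implicit Arguments. Unset Strict Implicit. Unset Printing Implicit Defensive.
Import Order.TTheory GRing.Theory Num.Theory.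
Local Open Scope ring_scope.

(* Sum over ordered k-tuples (j_1,...,j_k) of nonnegative integers with
   j_1+...+j_k = m of the product a_{j_1} ... a_{j_k};
   this is the coefficient of z^m in A(z)^k for A(z) = sum_j a_j z^j. *)
Definition tuple_prod_sum (F : fieldType) (a : nat -> F) (k m : nat) : F :=
  \sum_(t : {ffun 'I_k -> 'I_m.+1} | (\sum_(j < k) (t j : nat))%N == m)
     \prod_(j < k) a (t j : nat).

Definition composition_prod_sum (F : fieldType) (a : nat -> F) (k m : nat) : F :=
  \sum_(t : {ffun 'I_k -> 'I_m.+1} |
          [forall j, (0 < (t j : nat))%N] && ((\sum_(j < k) (t j : nat))%N == m))
     \prod_(j < k) a (t j : nat).

(* h is the sequence of boolean cumulants of the moment sequence mu
   (with mu 0 = 1): M(z) = 1/(1 - H(z)), H(z) = sum_{n>=1} h_n z^n,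
   i.e. M = 1 + H M, i.e. mu_n = sum_{k=1}^n h_k mu_{n-k} for n >= 1. *)
Definition is_boolean_cumulants (F : fieldType) (mu h : nat -> F) : Prop :=
  forall n, (0 < n)%N -> mu n = \sum_(1 <= k < n.+1) h k * mu (n - k)%N.

(* c is the sequence of free cumulants of mu: M(z) = C(z M(z)) with
   C(z) = 1 + sum_{k>=1} c_k z^k, i.e. for n >= 1
   mu_n = sum_{k=1}^n c_k [z^{n-k}] M(z)^k
        = sum_{k=1}^n c_k sum_{j_1+..+j_k = n-k} mu_{j_1}...mu_{j_k}
   (the standard moment-free cumulant recursion, equivalent to the
   noncrossing-partition formula). *)
Definition is_free_cumulants (F : fieldType) (mu c : nat -> F) : Prop :=
  forall n, (0 < n)%N ->
    mu n = \sum_(1 <= k < n.+1) c k * tuple_prod_sum mu k (n - k)%N.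

(* Main.v *)
Require Import Defs.
From HB Require Import structures.
From mathcomp Require Import all_boot all_order all_algebra.
From mathcomp Require Import complex reals.
From mathcomp Require Import zify ring.
Import Order.TTheory GRing.Theory Num.Theory.
Set Implicit Arguments. Unset Strict Implicit. Unset Printing Implicit Defensive.
Local Open Scope ring_scope.

Section Eqn.
Variable F : fieldType.
Implicit Types P Q S : {poly F}.

Definition eqn (d : nat) P Q := forall i, (i <= d)%N -> P`_i = Q`_i.

Lemma eqn_refl d P : eqn d P P. Proof. by []. Qed.
Lemma eqn_sym d P Q : eqn d P Q -> eqn d Q P.
Proof. by move=> H i hi; rewrite H. Qed.
Lemma eqn_trans d P Q S : eqn d P Q -> eqn d Q S -> eqn d P S.
Proof. by move=> H1 H2 i hi; rewrite H1 // H2. Qed.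
Lemma eqn_weak d e P Q : (e <= d)%N -> eqn d P Q -> eqn e P Q.
Proof. by move=> hed H i hi; apply: H; apply: leq_trans hed. Qed.
Lemma eqn_add d P Q P' Q' : eqn d P Q -> eqn d P' Q' -> eqn d (P + P') (Q + Q').
Proof. by move=> H1 H2 i hi; rewrite !coefD H1 // H2. Qed.
Lemma eqn_opp d P Q : eqn d P Q -> eqn d (- P) (- Q).
Proof. by move=> H i hi; rewrite !coefN H. Qed.
Lemma eqn_mulr d P Q S : eqn d P Q -> eqn d (P * S) (Q * S).
Proof.
move=> H i hi; rewrite !coefM; apply: eq_bigr => j _; rewrite H //.
by apply: leq_trans hi; rewrite -ltnS.
Qed.
Lemma eqn_mull d P Q S : eqn d P Q -> eqn d (S * P) (S * Q).
Proof. by move=> H; rewrite ![S * _]mulrC; apply: eqn_mulr. Qed.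
Lemma eqn_mul d P Q P' Q' : eqn d P Q -> eqn d P' Q' -> eqn d (P * P') (Q * Q').
Proof. by move=> H1 H2; apply: eqn_trans (eqn_mulr _ H1) (eqn_mull _ H2). Qed.
Lemma eqn_exp d P Q k : eqn d P Q -> eqn d (P ^+ k) (Q ^+ k).
Proof. by move=> H; elim: k => [|k IH]; rewrite ?expr0 // !exprS; apply: eqn_mul. Qed.
Lemma eqn_deriv d P Q : eqn d.+1 P Q -> eqn d P^`() Q^`().
Proof. by move=> H i hi; rewrite !coef_deriv H. Qed.
End Eqn.

Section Tup.
Variable F : fieldType.

Lemma tuple_coef (a : nat -> F) (P : {poly F}) k m :
  (forall j, (j <= m)%N -> P`_j = a j) -> (P ^+ k)`_m = tuple_prod_sum a k m.
Proof.
move=> HP.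
set Q : {poly F} := \sum_(i < m.+1) a i *: 'X^i.
have eQ : eqn m P Q.
  by move=> j hj; rewrite /Q -poly_def coef_poly ltnS hj HP.
rewrite (eqn_exp k eQ) //.
have -> : Q ^+ k = \prod_(j < k) Q by rewrite prodr_const card_ord.
rewrite bigA_distr_bigA coef_sum /tuple_prod_sum [RHS]big_mkcond /=.
apply: eq_bigr => t _.
have -> : \prod_(j < k) (a (t j) *: 'X^(t j)) =
   (\prod_(j < k) a (t j))%:P * 'X^(\sum_(j < k) (t j : nat)).
  rewrite -prodrXr rmorph_prod -big_split /=.
  by apply: eq_bigr => j _; rewrite mul_polyC.
rewrite coefCM coefXn eq_sym; case: eqP => _; by rewrite ?mulr1 ?mulr0.
Qed.

Lemma comp_tuple (a : nat -> F) k m :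
  composition_prod_sum a k m =
  tuple_prod_sum (fun j => if j == 0%N then 0 else a j) k m.
Proof.
rewrite /composition_prod_sum /tuple_prod_sum [RHS]big_mkcond [LHS]big_mkcond.
apply: eq_bigr => t _.
case: (boolP [forall j, (0 < (t j : nat))%N]) => hf /=.
  case: eqP => // _; apply: eq_bigr => j _.
  by have := forallP hf j; rewrite lt0n => /negbTE ->.
case: eqP => // _.
move/forallPn: hf => [j hj]; rewrite (bigD1 j) //=.
by rewrite lt0n negbK in hj; rewrite hj mul0r.
Qed.
End Tup.

Section Key.
Variable F : fieldType.
Hypothesis hF : forall n : nat, (n.+1)%:R != 0 :> F.

Lemma pow_red (Mp psi : {poly F}) d k l :
  eqn d (Mp * psi) 1 -> eqn d (Mp ^+ k * psi ^+ (k + l)) (psi ^+ l).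
Proof.
move=> H.
have -> : Mp ^+ k * psi ^+ (k + l) = (Mp * psi) ^+ k * psi ^+ l.
  by rewrite exprD exprMn mulrA.
rewrite -{2}[psi ^+ l]mul1r; apply: eqn_mulr.
by rewrite -(expr1n _ k); apply: eqn_exp.
Qed.

Lemma Kk_eq (Mp psi : {poly F}) k : eqn k.+1 (Mp * psi) 1 ->
  ((('X * Mp) ^+ k.+1)^`() * psi ^+ k.+1)`_k = k.+1%:R.
Proof.
move=> H.
have -> : (('X * Mp) ^+ k.+1)^`() * psi ^+ k.+1 =
  (('X * Mp) ^+ k.+1 * psi ^+ k.+1)^`() - ('X * Mp) ^+ k.+1 * (psi ^+ k.+1)^`().
  by rewrite derivM addrK.
rewrite coefB coef_deriv !exprMn -!mulrA !coefXnM ltnn ltnSn subnn.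
have := pow_red k.+1 0 H (leq0n _); rewrite addn0 expr0 coef1 /= => ->.
by rewrite subr0.
Qed.

Lemma Kk_lt (Mp psi : {poly F}) k j : eqn (k + j.+1) (Mp * psi) 1 ->
  ((('X * Mp) ^+ k)^`() * psi ^+ (k + j.+1))`_(k + j) = 0.
Proof.
move=> H.
have -> : (('X * Mp) ^+ k)^`() * psi ^+ (k + j.+1) =
  (('X * Mp) ^+ k * psi ^+ (k + j.+1))^`() - ('X * Mp) ^+ k * (psi ^+ (k + j.+1))^`().
  by rewrite derivM addrK.
rewrite coefB coef_deriv deriv_exp addnS /= !exprMn -!mulrA !coefXnM.
have l1 : ((k + j).+1 < k)%N = false by rewrite ltnNge -addnS leq_addr.
have l2 : (k + j < k)%N = false by rewrite ltnNge leq_addr.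
rewrite l1 l2 -addnS !addKn.
rewrite (pow_red k j.+1 H (leq_addl _ _)).
have -> : Mp ^+ k * (psi^`() * psi ^+ (k + j) *+ (k + j.+1)) =
   (Mp ^+ k * psi ^+ (k + j) * psi^`()) *+ (k + j.+1).
  by rewrite mulrnAr [psi^`() * _]mulrC mulrA.
rewrite coefMn.
have H2 : eqn (k + j) (Mp ^+ k * psi ^+ (k + j)) (psi ^+ j).
  by apply: pow_red; apply: eqn_weak H; rewrite addnS.
rewrite (eqn_mulr psi^`() H2 (leq_addl _ _)).
have E : (psi ^+ j * psi^`())`_j = (psi ^+ j.+1)`_j.+1.
  have := coef_deriv (psi ^+ j.+1) j; rewrite deriv_exp /= coefMn.
  rewrite -[X in X = _]mulr_natr -[X in _ = X]mulr_natr.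
  move=> /(congr1 (fun x => x / j.+1%:R)); rewrite !(mulfK (hF j)).
  by rewrite mulrC.
by rewrite E subrr.
Qed.
End Key.

Section Main.
Variable F : fieldType.
Hypothesis hF : forall n : nat, (n.+1)%:R != 0 :> F.
Variables mu h c : nat -> F.
Hypothesis hmu0 : mu 0%N = 1.
Hypothesis hh : is_boolean_cumulants mu h.
Hypothesis hc : is_free_cumulants mu c.
Variable m : nat.

Local Notation n := m.+2.
Local Notation Mp := (\poly_(j < n.+1) mu j).
Local Notation Hp := (\poly_(j < n.+1) (if j == 0%N then 0 else h j)).
Local Notation psi := (1 - Hp).

Lemma stepA : eqn n (Mp * psi) 1.
Proof.
move=> i hi; rewrite mulrBr mulr1 coefB coef1 mulrC coefM coef_poly ltnS hi.
case: i hi => [|i] hi.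
  by rewrite big_ord1 coef_poly /= mul0r subr0 hmu0.
rewrite (hh (ltn0Sn i)). rewrite -(big_mkord xpredT (fun j => Hp`_j * Mp`_(i.+1 - j))) big_ltn // coef_poly /= mul0r add0r.
have -> : \sum_(1 <= j < i.+2) Hp`_j * Mp`_(i.+1 - j) =
          \sum_(1 <= k < i.+2) h k * mu (i.+1 - k).
  apply: eq_big_nat => j /andP[h1 h2]; rewrite !coef_poly.
  have -> : (j < m.+3)%N by move: hi h2; clear; move=> hi h2; lia.
  have -> : (i.+1 - j < m.+3)%N by lia.
  by rewrite (gtn_eqF h1).
by rewrite subrr.
Qed.

Lemma stepB : eqn n Mp (1 + \sum_(1 <= k < n.+1) c k *: ('X * Mp) ^+ k).
Proof.
move=> i hi; rewrite coef_poly ltnS hi coefD coef1 coef_sum.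
under eq_bigr do rewrite coefZ exprMn coefXnM.
case: i hi => [|i] hi.
  rewrite big_nat big1 ?addr0 ?hmu0 // => k /andP[hk _].
  by rewrite ifT ?mulr0.
rewrite /= add0r (hc (ltn0Sn i)).
have hle : (i.+2 <= m.+3)%N by lia.
have -> : \sum_(1 <= k < m.+3) c k * (if (i.+1 < k)%N then 0 else (Mp ^+ k)`_(i.+1 - k))
   = \sum_(1 <= k < i.+2) c k * (if (i.+1 < k)%N then 0 else (Mp ^+ k)`_(i.+1 - k)).
  rewrite (@big_cat_nat _ _ _ i.+2) //= [X in _ + X = _]big_nat [X in _ + X = _]big1 ?addr0 //.
  by move=> k /andP[hk _]; rewrite ifT ?mulr0.
apply: eq_big_nat => k /andP[hk1 hk2]; rewrite ifF; last lia.
congr (_ * _); symmetry; apply: tuple_coef => j hj.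
by rewrite coef_poly ifT //; lia.
Qed.

Lemma deriv1F : (1 : {poly F})^`() = 0.
Proof. by rewrite -polyC1 derivC. Qed.

Lemma stepC : (Mp^`() * psi ^+ n)`_(m.+1) = c n * n%:R.
Proof.
rewrite (eqn_mulr (psi ^+ n) (eqn_deriv stepB) (leqnn _)).
rewrite derivD deriv1F add0r raddf_sum /= mulr_suml coef_sum.
under eq_bigr do rewrite derivZ -scalerAl coefZ.
rewrite big_nat_recr //= Kk_eq; last exact: stepA.
rewrite big_nat big1 ?add0r // => k /andP[hk1 hk2].
have e1 : (k + (m.+1 - k).+1)%N = m.+2 by lia.
have e2 : (k + (m.+1 - k))%N = m.+1 by lia.
have := Kk_lt hF (k:=k) (j:=m.+1-k); rewrite e1 e2 => K.
by rewrite (K Mp psi stepA) mulr0.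
Qed.

Lemma stepD : (Mp^`() * psi ^+ n)`_(m.+1) = - (psi^`() * psi ^+ m)`_(m.+1).
Proof.
have d1 : eqn m.+1 (Mp^`() * psi) (- (Mp * psi^`())).
  move=> i hi; have := eqn_deriv stepA hi.
  rewrite derivM deriv1F coef0 coefD coefN => /eqP; rewrite addr_eq0 => /eqP.
  by [].
rewrite exprS mulrA (eqn_mulr _ d1 (leqnn _)).
have -> : - (Mp * psi^`()) * psi ^+ m.+1 = - (psi^`() * psi ^+ m) * (Mp * psi).
  by rewrite exprS; ring.
by rewrite (eqn_mull _ (eqn_weak (leqnSn _) stepA) (leqnn _)) mulr1 coefN.
Qed.

Lemma stepE : (psi^`() * psi ^+ m)`_(m.+1) *+ m.+1 = (psi ^+ m.+1)`_n *+ n.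
Proof. by have := coef_deriv (psi ^+ m.+1) m.+1; rewrite deriv_exp /= coefMn. Qed.

Lemma stepF r : (Hp ^+ r)`_n = composition_prod_sum h r n.
Proof.
rewrite comp_tuple; apply: tuple_coef => j hj; rewrite coef_poly ifT //; lia.
Qed.

Lemma sgcoef i (p : {poly F}) k : ((-1) ^+ i * p)`_k = (-1) ^+ i * p`_k.
Proof.
elim: i p => [|i IH] p; first by rewrite !expr0 !mul1r.
by rewrite !exprS -!mulrA !mulN1r coefN IH.
Qed.

Lemma main_gen : c n = \sum_(1 <= r < n)
            ((-1) ^+ (r - 1) / (n - 1)%:R * ('C(n - 1, r))%:R)
              * composition_prod_sum h r n.
Proof.
set B := (psi ^+ m.+1)`_n.
have hc1 : c n * n%:R = - B / (m.+1)%:R * n%:R.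
  have E' : (psi^`() * psi ^+ m)`_(m.+1) = B * n%:R / (m.+1)%:R.
    rewrite -[LHS](mulfK (hF m)) mulr_natr stepE -/B.
    by rewrite -[B *+ n]mulr_natr.
  rewrite -stepC stepD E'; ring.
have hc2 : c n = - B / (m.+1)%:R by apply: (mulIf (hF m.+1)).
rewrite hc2 /B exprBn coef_sum.
under eq_bigr do rewrite expr1n mulr1 coefMn sgcoef stepF.
rewrite -sumrN mulr_suml.
rewrite -(big_mkord xpredT (fun i => - (((-1) ^+ i * composition_prod_sum h i n) *+ 'C(m.+1, i)) / m.+1%:R)).
rewrite big_ltn // -stepF expr0 coef1 /= mulr0 mul0rn oppr0 mul0r add0r.
rewrite subn1 /=.
apply: eq_big_nat => r /andP[hr1 hr2].
case: r hr1 hr2 => [//|r] _ _.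
rewrite subSS subn0 exprS -mulr_natr. ring.
Qed.
End Main.

Theorem mainTheorem2 (R : realType) (mu h c : nat -> R[i])
  (hmu0 : mu 0%N = 1)
  (hh : is_boolean_cumulants mu h)
  (hc : is_free_cumulants mu c) :
  forall n : nat, (2 <= n)%N ->
    c n = \sum_(1 <= r < n)
            ((-1) ^+ (r - 1) / (n - 1)%:R * ('C(n - 1, r))%:R)
              * composition_prod_sum h r n.
Proof.
have hF : forall k : nat, (k.+1)%:R != 0 :> R[i] by move=> k; rewrite pnatr_eq0.
move=> n; case: n => [|[|m]] // _.
exact: (main_gen hF hmu0 hh hc).
Qed.
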